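(* Let $(Y,D)$ be binary random variables and $Z$ a random vector; write $q_{ij}(z)=\mathbb P(Y=i,D=j\mid Z=z)$. In the generalized binary Roy model the following hold. (1) If $(Y_0,Y_1)$ is a pair of binary random variables independent of $Z$ with $Y=Y_1D+Y_0(1-D)$, then for almost all $z\in\mathrm{Supp}(Z)$: $$\begin{aligned} &0\le \mathbb P(Y_0=1,Y_1=1)\le q_{10}(z)+q_{11}(z),\qquad 0\le \mathbb P(Y_0=0,Y_1=0)\le q_{00}(z)+q_{01}(z),\\ &0\le \mathbb P(Y_0=1,Y_1=0)\le q_{10}(z)+q_{01}(z),\qquad 0\le \mathbb P(Y_0=0,Y_1=1)\le q_{00}(z)+q_{11}(z),\\ &q_{10}(z)\le \mathbb P(Y_0=1)\le 1-q_{00}(z),\qquad q_{11}(z)\le \mathbb P(Y_1=1)\le 1-q_{01}(z). \end{aligned}$$ (2) Conversely, if $(p_{00},p_{01},p_{10},p_{11})$ is a probability vector such that for almost all $z\in\mathrm{Supp}(Z)$: $p_{11}\le q_{10}(z)+q_{11}(z)$, $p_{00}\le q_{00}(z)+q_{01}(z)$, $p_{10}\le q_{10}(z)+q_{01}(z)$, $p_{01}\le q_{00}(z)+q_{11}(z)$, $q_{10}(z)\le p_{10}+p_{11}\le 1-q_{00}(z)$, $q_{11}(z)\le p_{01}+p_{11}\le 1-q_{01}(z)$, then there exist, on some probability space, random variables $(\tilde Y,\tilde D,\tilde Z,Y_0,Y_1)$ with $(\tilde Y,\tilde D,\tilde Z)$ distributed as $(Y,D,Z)$, $(Y_0,Y_1)$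 binary and independent of $\tilde Z$, $\tilde Y=Y_1\tilde D+Y_0(1-\tilde D)$, and $\mathbb P(Y_0=i,Y_1=j)=p_{ij}$ for all $i,j$.
   Context: Generalized binary Roy model: observed $Y$ and $D\in\{0,1\}$, unobserved binary potential outcomes $(Y_0,Y_1)$ (possibly dependent) with $Y=Y_1D+Y_0(1-D)$; no restriction is placed on how $D$ is selected, except for the exclusion restriction that the observed variable $Z$ affects sector selection but not outcomes, i.e. $(Y_0,Y_1)$ is independent of $Z$. $\mathrm{Supp}(Z)$ is the support of $Z$. *)

(* Defs.v *)
From HB Require Import structures.
From mathcomp Require Import all_boot all_order all_algebra.
From mathcomp Require Import all_classical all_reals all_analysis.
Set Implicit Arguments. Unset Strict Implicit. Unset Printing Implicit Defensive.
Import Order.TTheory GRing.Theory Num.Theory.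
Local Open Scope classical_set_scope.
Local Open Scope ring_scope.
Local Open Scope ereal_scope.

Definition independent_rv d d1 d2 (T : measurableType d)
  (T1 : measurableType d1) (T2 : measurableType d2) (R : realType)
  (P : probability T R) (X : T -> T1) (W : T -> T2) : Prop :=
  forall (A : set T1) (B : set T2), measurable A -> measurable B ->
    P (X @^-1` A `&` W @^-1` B) = P (X @^-1` A) * P (W @^-1` B).

(* q is a version of the conditional probabilities
   q i j z = P(Y = i, D = j | Z = z): measurable in z and
   P(Y = i, D = j, Z \in B) = \int_B q i j dP_Z for all measurable B. *)
Definition cond_prob_version d dz (T : measurableType d)
  (TZ : measurableType dz) (R : realType) (P : probability T R)
  (Y D : T -> bool) (Z : T -> TZ) (q : bool -> bool -> TZ -> R) : Prop :=
  (forall i j, measurable_fun setT (q i j)) /\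
  (forall i j (B : set TZ), measurable B ->
     P ([set w | Y w = i /\ D w = j] `&` Z @^-1` B)
     = \int[pushforward P Z]_(z in B) (q i j z)%:E).

Definition same_law d d' dx (T : measurableType d) (T' : measurableType d')
  (TX : measurableType dx) (R : realType)
  (P : probability T R) (P' : probability T' R) (X : T -> TX) (X' : T' -> TX)
  : Prop :=
  forall A : set TX, measurable A -> P (X @^-1` A) = P' (X' @^-1` A).

(* Main.v *)
Require Import Defs.
From HB Require Import structures.
From mathcomp Require Import all_boot all_order all_algebra.
From mathcomp Require Import all_classical all_reals all_analysis.
From mathcomp Require Import lra.
Set Implicit Arguments. Unset Strict Implicit. Unset Printing Implicit Defensive.
Import Order.TTheory GRing.Theory Num.Theory.
Local Open Scope classical_set_scope.
Local Open Scope ring_scope.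
Local Open Scope ereal_scope.

Section pushZ.
Context d dX (T : measurableType d) (X : measurableType dX) (R : realType)
  (P : probability T R) (Z : T -> X) (mZ : measurable_fun setT Z).

Definition pushZ := let _ := mZ in pushforward P Z.

Let pushZ0 : pushZ set0 = 0.
Proof. by rewrite /pushZ /pushforward preimage_set0 measure0. Qed.

Let pushZ_ge0 A : 0 <= pushZ A.
Proof. exact: measure_ge0. Qed.

Let pushZ_sa : semi_sigma_additive pushZ.
Proof.
move=> F mF tF mUF; rewrite /pushZ /pushforward preimage_bigcup.
apply: measure_semi_sigma_additive.
- by move=> n; rewrite -[X in measurable X]setTI; exact: mZ.
- apply/trivIsetP => /= i j _ _ ij; rewrite -preimage_setI.
  by move/trivIsetP : tF => /(_ _ _ _ _ ij) ->//; rewrite preimage_set0.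
- by rewrite -preimage_bigcup -[X in measurable X]setTI; exact: mZ.
Qed.

HB.instance Definition _ := isMeasure.Build _ _ _ pushZ
  pushZ0 pushZ_ge0 pushZ_sa.

Let pushZ_setT : pushZ setT = 1.
Proof. by rewrite /pushZ /pushforward preimage_setT probability_setT. Qed.

HB.instance Definition _ := Measure_isProbability.Build _ _ _ pushZ pushZ_setT.

End pushZ.
Arguments pushZ {d dX T X R} P Z mZ.

Section Pr.
Context d (T : measurableType d) (R : realType) (P : probability T R).

Definition Pr (A : set T) : R := fine (P A).

Lemma PrE A : measurable A -> P A = (Pr A)%:E.
Proof. by move=> mA; rewrite /Pr fineK// fin_num_measure. Qed.

Lemma Pr_ge0 A : (0 <= Pr A)%R.
Proof. exact/fine_ge0/measure_ge0. Qed.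

Lemma Pr_le A B : measurable A -> measurable B -> A `<=` B -> (Pr A <= Pr B)%R.
Proof.
move=> mA mB AB; rewrite -lee_fin -!PrE//.
by apply: le_measure => //; rewrite inE.
Qed.

Lemma Pr_le1 A : measurable A -> (Pr A <= 1)%R.
Proof. by move=> mA; rewrite -lee_fin -PrE// probability_le1. Qed.

Lemma Pr_U2 A B : measurable A -> measurable B -> (Pr (A `|` B) <= Pr A + Pr B)%R.
Proof.
move=> mA mB; rewrite -lee_fin EFinD -!PrE//; last exact: measurableU.
exact: measureU2.
Qed.

Lemma Pr_U A B : measurable A -> measurable B -> A `&` B = set0 ->
  Pr (A `|` B) = (Pr A + Pr B)%R.
Proof.
move=> mA mB AB; apply/EFin_inj; rewrite EFinD -!PrE//; last exact: measurableU.
exact: measureU.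
Qed.

Lemma Pr_T : Pr setT = 1%R.
Proof. by rewrite /Pr probability_setT. Qed.

End Pr.

Section gen.
Context dX (X : measurableType dX) (R : realType) (mu : probability X R).

Lemma ae_ge0 (f : X -> R) : measurable_fun setT f ->
  (forall B, measurable B -> 0 <= \int[mu]_(x in B) (f x)%:E) ->
  {ae mu, forall x, (0 <= f x)%R}.
Proof.
move=> mf H.
pose N := [set x | (f x < 0)%R].
have mN : measurable N.
  rewrite (_ : N = f @^-1` (`]-oo, 0%R[%classic : set R)).
    by rewrite -[X in measurable X]setTI; apply: mf => //; exact: measurable_itv.
  by apply/seteqP; split => x /=; rewrite in_itv.
have mfN := proj2 (measurable_realfun.measurable_EFinP N f) (measurable_funTS mf).
have I0 : \int[mu]_(x in N) `|(EFin \o f) x| = 0.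
  have e : \int[mu]_(x in N) (f x)%:E = - \int[mu]_(x in N) `|(EFin \o f) x|.
    rewrite -integral_ge0N; last by move=> *; exact: abse_ge0.
    apply: eq_integral => x; rewrite inE /= => fx0.
    by rewrite /= ltr0_norm ?opprK.
  apply/eqP; rewrite eq_le integral_ge0 ?andbT; last by move=> *; exact: abse_ge0.
  by have := H N mN; rewrite e oppe_ge0.
have [h _] := ae_eq_integral_abs mu mN mfN.
apply: filterS (h I0) => x /= hx.
rewrite leNgt; apply/negP => fx.
by have := hx fx => -[] /eqP; rewrite lt_eqF.
Qed.

Lemma integrable_ge0 (f : X -> R) : measurable_fun setT f ->
  {ae mu, forall x, (0 <= f x)%R} -> \int[mu]_x (f x)%:E < +oo ->
  mu.-integrable setT (EFin \o f).
Proof.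
move=> mf f0 fi; apply/integrableP; split; first exact/measurable_realfun.measurable_EFinP.
rewrite (@ae_eq_integral _ _ _ mu setT (EFin \o f) (fun x => `|(EFin \o f) x|)) //.
- rewrite (_ : (fun x => _) = EFin \o (Num.norm \o f)); last by apply/funext.
  apply/measurable_realfun.measurable_EFinP.
  apply: measurableT_comp mf; exact: measurable_realfun.normr_measurable.
- exact/measurable_realfun.measurable_EFinP.
- by apply: filterS f0 => x fx _; apply: gee0_abs; rewrite lee_fin.
Qed.

Lemma int_addE (f g : X -> R) B : measurable B ->
  mu.-integrable setT (EFin \o f) -> mu.-integrable setT (EFin \o g) ->
  \int[mu]_(x in B) (f x + g x)%:E =
  \int[mu]_(x in B) (f x)%:E + \int[mu]_(x in B) (g x)%:E.
Proof.
move=> mB If Ig.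
rewrite -(integralD_EFin mB); last 2 first.
- exact: integrableS If.
- exact: integrableS Ig.
by apply: eq_integral => x _; rewrite /= EFinD.
Qed.

Lemma integrable_add (f g : X -> R) :
  mu.-integrable setT (EFin \o f) -> mu.-integrable setT (EFin \o g) ->
  mu.-integrable setT (EFin \o (fun x => f x + g x)%R).
Proof.
move=> If Ig; apply: (eq_integrable measurableT (fun x => (f x)%:E + (g x)%:E)).
  by move=> x _; rewrite /= EFinD.
exact: (integrableD measurableT If Ig).
Qed.

Lemma int_cB (f : X -> R) c B : measurable B ->
  mu.-integrable setT (EFin \o f) ->
  \int[mu]_(x in B) (c - f x)%:E = c%:E * mu B - \int[mu]_(x in B) (f x)%:E.
Proof.
move=> mB If.
rewrite (_ : \int[mu]_(x in B) (c - f x)%:E =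
   \int[mu]_(x in B) ((cst c x)%:E - (f x)%:E)); last first.
  by apply: eq_integral => x _; rewrite EFinB.
rewrite (integralB_EFin mB); last 2 first.
- exact: finite_measure_integrable_cst.
- exact: integrableS If.
have -> // : \int[mu]_(x in B) (cst c x)%:E = c%:E * mu B.
by rewrite -integral_cst//; apply: eq_integral.
Qed.

Lemma int_Bc (f : X -> R) c B : measurable B ->
  mu.-integrable setT (EFin \o f) ->
  \int[mu]_(x in B) (f x - c)%:E = \int[mu]_(x in B) (f x)%:E - c%:E * mu B.
Proof.
move=> mB If.
rewrite (_ : \int[mu]_(x in B) (f x - c)%:E =
   \int[mu]_(x in B) ((f x)%:E - (cst c x)%:E)); last first.
  by apply: eq_integral => x _; rewrite EFinB.
rewrite (integralB_EFin mB); last 2 first.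
- exact: integrableS If.
- exact: finite_measure_integrable_cst.
have -> // : \int[mu]_(x in B) (cst c x)%:E = c%:E * mu B.
by rewrite -integral_cst//; apply: eq_integral.
Qed.

Lemma ae_le (f : X -> R) c : measurable_fun setT f ->
  mu.-integrable setT (EFin \o f) ->
  (forall B, measurable B -> \int[mu]_(x in B) (f x)%:E <= c%:E * mu B) ->
  {ae mu, forall x, (f x <= c)%R}.
Proof.
move=> mf If H.
have := @ae_ge0 (fun x => c - f x)%R.
have mcf : measurable_fun setT (fun x => c - f x)%R.
  exact: measurable_realfun.measurable_funB.
move=> /(_ mcf) h.
have : {ae mu, forall x, (0 <= c - f x)%R}.
  apply: h => B mB; rewrite int_cB// sube_ge0 ?H//.
  by rewrite integrable_fin_num//; exact: integrableS If.
by apply: filterS => x; rewrite subr_ge0.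
Qed.

Lemma ae_ge (f : X -> R) c : measurable_fun setT f ->
  mu.-integrable setT (EFin \o f) ->
  (forall B, measurable B -> c%:E * mu B <= \int[mu]_(x in B) (f x)%:E) ->
  {ae mu, forall x, (c <= f x)%R}.
Proof.
move=> mf If H.
have := @ae_ge0 (fun x => f x - c)%R.
have mcf : measurable_fun setT (fun x => f x - c)%R.
  exact: measurable_realfun.measurable_funB.
move=> /(_ mcf) h.
have : {ae mu, forall x, (0 <= f x - c)%R}.
  apply: h => B mB; rewrite int_Bc// sube_ge0 ?H//.
  by rewrite fin_numM// fin_num_measure.
by apply: filterS => x; rewrite subr_ge0.
Qed.

End gen.

Lemma mpreT d1 d2 (T1 : measurableType d1) (T2 : measurableType d2)
  (f : T1 -> T2) A : measurable_fun setT f -> measurable A ->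
  measurable (f @^-1` A).
Proof. by move=> mf mA; rewrite -[X in measurable X]setTI; exact: mf. Qed.

Section P1.
Context d (T : measurableType d) (R : realType) (P : probability T R)
  dX (X : measurableType dX) (Z : T -> X) (mZ : measurable_fun setT Z).
Local Notation mu := (pushZ P Z mZ : probability X R).
Local Notation Pr := (Pr P).

Lemma muE B : measurable B -> mu B = (Pr (Z @^-1` B))%:E.
Proof. by move=> mB; rewrite -PrE//; exact: mpreT. Qed.

Lemma cp_int S (q : X -> R) : measurable S -> measurable_fun setT q ->
  (forall B, measurable B -> P (S `&` Z @^-1` B) = \int[mu]_(z in B) (q z)%:E) ->
  mu.-integrable setT (EFin \o q).
Proof.
move=> mS mq H; apply: integrable_ge0 => //.
- by apply: ae_ge0 => // B mB; rewrite -H//; exact: measure_ge0.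
- rewrite -H// PrE ?ltry//; apply: measurableI => //; exact: mpreT.
Qed.

Lemma ae_upper2 E S1 S2 (q1 q2 : X -> R) :
  measurable E -> measurable S1 -> measurable S2 ->
  measurable_fun setT q1 -> measurable_fun setT q2 ->
  (forall B, measurable B -> P (S1 `&` Z @^-1` B) = \int[mu]_(z in B) (q1 z)%:E) ->
  (forall B, measurable B -> P (S2 `&` Z @^-1` B) = \int[mu]_(z in B) (q2 z)%:E) ->
  (forall B, measurable B -> Pr (E `&` Z @^-1` B) = (Pr E * Pr (Z @^-1` B))%R) ->
  E `<=` S1 `|` S2 ->
  {ae mu, forall z, (Pr E <= q1 z + q2 z)%R}.
Proof.
move=> mE mS1 mS2 mq1 mq2 H1 H2 HE sub.
have I1 := cp_int mS1 mq1 H1; have I2 := cp_int mS2 mq2 H2.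
apply: (ae_ge (f := fun z => q1 z + q2 z)%R).
- exact: measurable_realfun.measurable_funD.
- apply: (eq_integrable measurableT (fun x => (q1 x)%:E + (q2 x)%:E)).
    by move=> x _; rewrite /= EFinD.
  exact: (integrableD measurableT I1 I2).
move=> B mB; have mZB := mpreT mZ mB.
rewrite int_addE// -H1// -H2// muE// !PrE//; try exact: measurableI.
rewrite -EFinM -EFinD lee_fin -HE//.
apply: le_trans (Pr_U2 _ _ _); try exact: measurableI.
apply: Pr_le.
- exact: measurableI.
- by apply: measurableU; exact: measurableI.
- by move=> w [/sub [h|h] zb]; [left|right].
Qed.

Lemma ae_lower E S1 (q1 : X -> R) :
  measurable E -> measurable S1 -> measurable_fun setT q1 ->
  (forall B, measurable B -> P (S1 `&` Z @^-1` B) = \int[mu]_(z in B) (q1 z)%:E) ->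
  (forall B, measurable B -> Pr (E `&` Z @^-1` B) = (Pr E * Pr (Z @^-1` B))%R) ->
  S1 `<=` E ->
  {ae mu, forall z, (q1 z <= Pr E)%R}.
Proof.
move=> mE mS1 mq1 H1 HE sub.
have I1 := cp_int mS1 mq1 H1.
apply: ae_le => //.
move=> B mB; have mZB := mpreT mZ mB.
rewrite -H1// muE// !PrE//; try exact: measurableI.
rewrite -EFinM lee_fin -HE//.
apply: Pr_le; try exact: measurableI.
by move=> w [/sub h zb].
Qed.

Lemma ae_upperC E S1 (q1 : X -> R) :
  measurable E -> measurable S1 -> measurable_fun setT q1 ->
  (forall B, measurable B -> P (S1 `&` Z @^-1` B) = \int[mu]_(z in B) (q1 z)%:E) ->
  (forall B, measurable B -> Pr (E `&` Z @^-1` B) = (Pr E * Pr (Z @^-1` B))%R) ->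
  S1 `&` E = set0 ->
  {ae mu, forall z, (q1 z <= 1 - Pr E)%R}.
Proof.
move=> mE mS1 mq1 H1 HE dis.
have I1 := cp_int mS1 mq1 H1.
apply: ae_le => //.
move=> B mB; have mZB := mpreT mZ mB.
rewrite -H1// muE// !PrE//; try exact: measurableI.
rewrite -EFinM lee_fin mulrBl mul1r -HE//.
have h1 := @Pr_U _ _ _ P (S1 `&` Z @^-1` B) (E `&` Z @^-1` B).
have h2 : (Pr ((S1 `&` Z @^-1` B) `|` (E `&` Z @^-1` B)) <= Pr (Z @^-1` B))%R.
  apply: Pr_le => //; first by apply: measurableU; exact: measurableI.
  by move=> w [] [].
rewrite h1 in h2; try exact: measurableI.
  lra.
rewrite setIACA dis set0I //.
Qed.

End P1.

Lemma mbool (A : set bool) : measurable A.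
Proof. exact: I. Qed.

Section P1main.
Context d (T : measurableType d) (R : realType) (P : probability T R)
  dX (X : measurableType dX) (Z : T -> X) (mZ : measurable_fun setT Z).
Local Notation mu := (pushZ P Z mZ : probability X R).
Local Notation Pr := (Pr P).

Lemma ae_change (F : X -> Prop) :
  {ae mu, forall z, F z} -> {ae pushforward P Z, forall z, F z}.
Proof. exact. Qed.

Lemma indepPr (W : T -> bool * bool) A B : measurable_fun setT W ->
  independent_rv P W Z -> measurable A -> measurable B ->
  Pr (W @^-1` A `&` Z @^-1` B) = (Pr (W @^-1` A) * Pr (Z @^-1` B))%R.
Proof.
move=> mW ind mA mB; rewrite /Pr ind// fineM//; apply: fin_num_measure.
- exact: mpreT.
- exact: mpreT.
Qed.

Lemma ae8 (F1 F2 F3 F4 F5 F6 F7 F8 G : X -> Prop) :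
  (forall z, F1 z -> F2 z -> F3 z -> F4 z -> F5 z -> F6 z -> F7 z -> F8 z -> G z) ->
  {ae mu, forall z, F1 z} -> {ae mu, forall z, F2 z} -> {ae mu, forall z, F3 z} ->
  {ae mu, forall z, F4 z} -> {ae mu, forall z, F5 z} -> {ae mu, forall z, F6 z} ->
  {ae mu, forall z, F7 z} -> {ae mu, forall z, F8 z} -> {ae mu, forall z, G z}.
Proof.
move=> H h1 h2 h3 h4 h5 h6 h7 h8; near=> z; apply: H.
- exact: (near h1 z).
- exact: (near h2 z).
- exact: (near h3 z).
- exact: (near h4 z).
- exact: (near h5 z).
- exact: (near h6 z).
- exact: (near h7 z).
- exact: (near h8 z).
Unshelve. all: by end_near.
Qed.

Lemma part1 (Y D : T -> bool) (q : bool -> bool -> X -> R) :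
  measurable_fun setT Y -> measurable_fun setT D ->
  cond_prob_version P Y D Z q ->
  (forall Y0 Y1 : T -> bool,
     measurable_fun setT Y0 -> measurable_fun setT Y1 ->
     independent_rv P (fun w => (Y0 w, Y1 w)) Z ->
     (forall w, Y w = if D w then Y1 w else Y0 w) ->
     {ae pushforward P Z, forall z,
        [/\ 0 <= P [set w | Y0 w = true /\ Y1 w = true]
              <= (q true false z + q true true z)%:E &
        [/\
            0 <= P [set w | Y0 w = false /\ Y1 w = false]
              <= (q false false z + q false true z)%:E,
            0 <= P [set w | Y0 w = true /\ Y1 w = false]
              <= (q true false z + q false true z)%:E,
            0 <= P [set w | Y0 w = false /\ Y1 w = true]
              <= (q false false z + q true true z)%:E,
            (q true false z)%:E <= P [set w | Y0 w = true]
              <= (1 - q false false z)%:E &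
            (q true true z)%:E <= P [set w | Y1 w = true]
              <= (1 - q false true z)%:E]]}).
Proof.
move=> mY mD [mq Hq] Y0 Y1 mY0 mY1 ind HY.
pose W := fun w => (Y0 w, Y1 w).
have mW : measurable_fun setT W by exact: measurable_fun_pair.
pose S i j := [set w | Y w = i /\ D w = j].
have mS i j : measurable (S i j).
  exact: measurableI (mpreT mY (mbool [set i])) (mpreT mD (mbool [set j])).
have Hq' i j : forall B, measurable B ->
    P (S i j `&` Z @^-1` B) = \int[mu]_(z in B) (q i j z)%:E.
  exact: Hq.
pose E a b := [set w | Y0 w = a /\ Y1 w = b].
have mE a b : measurable (E a b).
  exact: measurableI (mpreT mY0 (mbool [set a])) (mpreT mY1 (mbool [set b])).
have HE a b : forall B, measurable B ->
    Pr (E a b `&` Z @^-1` B) = (Pr (E a b) * Pr (Z @^-1` B))%R.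
  move=> B mB; have := @indepPr W ([set a] `*` [set b]) B mW ind.
  by apply => //; exact: measurableX.
pose E0 := [set w | Y0 w = true].
pose E1 := [set w | Y1 w = true].
have mE0 : measurable E0 by exact: mpreT mY0 (mbool [set true]).
have mE1 : measurable E1 by exact: mpreT mY1 (mbool [set true]).
have HE0 : forall B, measurable B ->
    Pr (E0 `&` Z @^-1` B) = (Pr E0 * Pr (Z @^-1` B))%R.
  move=> B mB; have -> : E0 = W @^-1` ([set true] `*` setT).
    by apply/seteqP; split => w /=; [move=> h; split|case].
  by apply: indepPr => //; exact: measurableX.
have HE1 : forall B, measurable B ->
    Pr (E1 `&` Z @^-1` B) = (Pr E1 * Pr (Z @^-1` B))%R.
  move=> B mB; have -> : E1 = W @^-1` (setT `*` [set true]).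
    by apply/seteqP; split => w /=; [move=> h; split|case].
  by apply: indepPr => //; exact: measurableX.
have h1 : {ae mu, forall z, (Pr (E true true) <= q true false z + q true true z)%R}.
  apply: ae_upper2 => //; [exact: Hq'|exact: Hq'|exact: HE|].
  move=> w [/= a b]; have := HY w; rewrite a b /S /=.
  by case: (D w) => ->; [right|left].
have h2 : {ae mu, forall z, (Pr (E false false) <= q false false z + q false true z)%R}.
  apply: ae_upper2 => //; [exact: Hq'|exact: Hq'|exact: HE|].
  move=> w [/= a b]; have := HY w; rewrite a b /S /=.
  by case: (D w) => ->; [right|left].
have h3 : {ae mu, forall z, (Pr (E true false) <= q true false z + q false true z)%R}.
  apply: ae_upper2 => //; [exact: Hq'|exact: Hq'|exact: HE|].
  move=> w [/= a b]; have := HY w; rewrite a b /S /=.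
  by case: (D w) => ->; [right|left].
have h4 : {ae mu, forall z, (Pr (E false true) <= q false false z + q true true z)%R}.
  apply: ae_upper2 => //; [exact: Hq'|exact: Hq'|exact: HE|].
  move=> w [/= a b]; have := HY w; rewrite a b /S /=.
  by case: (D w) => ->; [right|left].
have h5 : {ae mu, forall z, (q true false z <= Pr E0)%R}.
  apply: ae_lower => //; [exact: Hq'|].
  move=> w [/= a b]; have := HY w; rewrite b a /=; done.
have h6 : {ae mu, forall z, (q false false z <= 1 - Pr E0)%R}.
  apply: ae_upperC => //; [exact: Hq'|].
  apply/seteqP; split => w // [[/= a b] c]; have := HY w; rewrite b a c /=; done.
have h7 : {ae mu, forall z, (q true true z <= Pr E1)%R}.
  apply: ae_lower => //; [exact: Hq'|].
  move=> w [/= a b]; have := HY w; rewrite b a /=; done.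
have h8 : {ae mu, forall z, (q false true z <= 1 - Pr E1)%R}.
  apply: ae_upperC => //; [exact: Hq'|].
  apply/seteqP; split => w // [[/= a b] c]; have := HY w; rewrite b a c /=; done.
apply: ae_change; apply: (ae8 _ h1 h2 h3 h4 h5 h6 h7 h8) => z a1 a2 a3 a4 a5 a6 a7 a8.
rewrite (PrE P (mE true true)) (PrE P (mE false false)) (PrE P (mE true false)).
rewrite (PrE P (mE false true)) (PrE P mE0) (PrE P mE1) !lee_fin !Pr_ge0 /=.
split; [|split]; try (apply/andP; split); lra.
Qed.

End P1main.

Section Constr.
Context dX (X : measurableType dX) (R : realType) (mu : probability X R)
  (pi : nat -> X -> R).
Hypothesis mpi : forall c, measurable_fun setT (pi c).
Hypothesis pi_ge0 : forall c z, (0 <= pi c z)%R.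
Hypothesis pi_sum : forall z, (\sum_(c <- iota 0 8) pi c z = 1)%R.

Definition Pp (A : set (X * nat)) : \bar R :=
  let _ := (mpi, pi_ge0, pi_sum) in
  \sum_(c <- iota 0 8) \int[mu]_(z in ysection A c) (pi c z)%:E.

Lemma PpE A : Pp A = \sum_(c <- iota 0 8) \int[mu]_(z in ysection A c) (pi c z)%:E.
Proof. by []. Qed.

Let Pp0 : Pp set0 = 0.
Proof.
rewrite PpE big1// => c _; by rewrite ysection0 integral_set0.
Qed.

Let Pp_ge0 A : 0 <= Pp A.
Proof.
rewrite PpE; apply: sume_ge0 => c _; apply: integral_ge0 => x _.
by rewrite lee_fin.
Qed.

Let Pp_sa : semi_sigma_additive Pp.
Proof.
move=> F mF tF mUF.
rewrite [X in _ --> X](_ : _ = lim ((fun n => \sum_(0 <= i < n) Pp (F i)) @ \oo)).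
  by apply: is_cvg_ereal_nneg_natsum => k _; exact: Pp_ge0.
rewrite PpE.
under [in RHS]eq_fun do under eq_bigr do rewrite PpE.
rewrite nneseries_sum; last first.
  by move=> c j _; apply: integral_ge0 => x _; rewrite lee_fin.
apply: eq_bigr => c _.
rewrite ysection_bigcup ge0_integral_bigcup//.
- by move=> k; exact: measurable_ysection.
- apply/measurable_realfun.measurable_EFinP; exact: measurable_funTS.
- by move=> x _; rewrite lee_fin.
- exact: trivIset_ysection.
Qed.

HB.instance Definition _ := isMeasure.Build _ _ _ Pp Pp0 Pp_ge0 Pp_sa.

Let Pp_setT : Pp setT = 1.
Proof.
rewrite PpE.
rewrite (eq_bigr (fun c => \int[mu]_(z in setT) (pi c z)%:E)); last first.
  move=> c _; have -> // : ysection [set: X * nat] c = [set: X].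
  by apply/seteqP; split => x //= _; rewrite /ysection /= in_setT.
rewrite -ge0_integral_sum//; last 2 first.
- move=> c; apply/measurable_realfun.measurable_EFinP; exact: mpi.
- by move=> c x _; rewrite lee_fin.
under eq_integral do rewrite sumEFin pi_sum.
by rewrite integral_cst// mul1e; exact: probability_setT.
Qed.

HB.instance Definition _ := Measure_isProbability.Build _ _ _ Pp Pp_setT.

End Constr.

Definition dec0 (c : nat) : bool := odd c./2./2.
Definition dec1 (c : nat) : bool := odd c./2.
Definition decD (c : nat) : bool := odd c.

Section PiDef.
Context (X : Type) (R : realType) (p : bool -> bool -> R)
  (q : bool -> bool -> X -> R).
Local Open Scope ring_scope.

Definition s0 z := p false false + p true false - q false true z.
Definition tf z := Num.max (Num.max 0 (q false false z - p false true))
  (Num.max (s0 z - p true false) (s0 z - q true false z)).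
Definition xraw a b z :=
  match a, b with
  | false, false => tf z
  | false, true => q false false z - tf z
  | true, false => s0 z - tf z
  | true, true => q true false z - s0 z + tf z
  end.
Definition xcl a b z := Num.min (Num.max (xraw a b z) 0) (p a b).
Definition pif a b (dd : bool) z := if dd then p a b - xcl a b z else xcl a b z.
Definition pic c z := pif (dec0 c) (dec1 c) (decD c) z.

Hypothesis p_ge0 : forall a b, 0 <= p a b.
Hypothesis p_sum : p false false + p false true + p true false + p true true = 1.

Lemma xcl_ge0 a b z : 0 <= xcl a b z.
Proof. by rewrite /xcl le_min p_ge0 le_max lexx orbT. Qed.

Lemma xcl_le a b z : xcl a b z <= p a b.
Proof. by rewrite /xcl ge_min lexx orbT. Qed.

Lemma pic_le1 c z : pic c z <= 1.
Proof.
have hp a b : p a b <= 1.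
  move: p_sum (p_ge0 false false) (p_ge0 false true) (p_ge0 true false) (p_ge0 true true).
  by case: a; case: b; lra.
rewrite /pic /pif; case: ifP => _.
  by have := xcl_ge0 (dec0 c) (dec1 c) z; have := hp (dec0 c) (dec1 c); lra.
exact: le_trans (xcl_le _ _ _) (hp _ _).
Qed.

Lemma pic_ge0 c z : 0 <= pic c z.
Proof.
rewrite /pic /pif; case: ifP => _; last exact: xcl_ge0.
by rewrite subr_ge0 xcl_le.
Qed.

Lemma pic_sum z : \sum_(c <- iota 0 8) pic c z = 1.
Proof.
rewrite /= !big_cons big_nil /pic /pif /dec0 /dec1 /decD /=.
rewrite -p_sum; lra.
Qed.

Lemma pic_pair c z : c \in [:: 0; 2; 4; 6]%N ->
  pic c z + pic c.+1 z = p (dec0 c) (dec1 c).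
Proof.
by case: c => [|[|[|[|[|[|[|c]]]]]]] //= _; rewrite /pic /pif /dec0 /dec1 /decD /=; lra.
Qed.

Lemma dec_pair c : (c < 4)%N ->
  dec0 c.*2.+1 = dec0 c.*2 /\ dec1 c.*2.+1 = dec1 c.*2.
Proof. by case: c => [|[|[|[|//]]]]. Qed.

Lemma max2 (x y : R) : Num.max x y = x \/ Num.max x y = y.
Proof. by rewrite maxEle; case: ifP; auto. Qed.

Lemma max4 (a b c d : R) :
  let m := Num.max (Num.max a b) (Num.max c d) in
  [/\ a <= m, b <= m, c <= m, d <= m &
     m = a \/ m = b \/ m = c \/ m = d].
Proof.
move=> m; rewrite /m !le_max !lexx !orbT /=; split => //.
case: (max2 (Num.max a b) (Num.max c d)) => ->.
  by case: (max2 a b) => ->; auto.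
by case: (max2 c d) => ->; auto.
Qed.

Definition good z :=
  [/\ 0 <= q false false z, 0 <= q false true z, 0 <= q true false z,
      0 <= q true true z &
      q false false z + q false true z + q true false z + q true true z = 1] /\
    [/\ (p true true <= q true false z + q true true z)%R &
        [/\    (p false false <= q false false z + q false true z)%R,
            (p true false <= q true false z + q false true z)%R,
            (p false true <= q false false z + q true true z)%R,
            (q true false z <= p true false + p true true
               <= 1 - q false false z)%R &
            (q true true z <= p false true + p true true
               <= 1 - q false true z)%R]].

Lemma good_xcl z : good z -> forall a b, xcl a b z = xraw a b z.
Proof.
case=> -[q00 q01 q10 q11 qs] [h1 [h2 h3 h4 /andP[h5 h5'] /andP[h6 h6']]] a b.
have [lo hi] : 0 <= xraw a b z /\ xraw a b z <= p a b.
  move: p_sum (p_ge0 false false) (p_ge0 false true) (p_ge0 true false) (p_ge0 true true).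
  have [l1 l2 l3 l4 e] := max4 0 (q false false z - p false true)
    (s0 z - p true false) (s0 z - q true false z).
  rewrite /xraw -/(tf z); move: l1 l2 l3 l4 e; rewrite -/(tf z) /s0.
  move=> l1 l2 l3 l4 e ps p1 p2 p3 p4.
  by case: a; case: b; (case: e => [e|[e|[e|e]]]); split; lra.
by rewrite /xcl max_l// min_l.
Qed.

Lemma good_sums z : good z ->
  [/\ pic 0 z + pic 2 z = q false false z,
      pic 4 z + pic 6 z = q true false z,
      pic 1 z + pic 5 z = q false true z &
      pic 3 z + pic 7 z = q true true z].
Proof.
move=> g; have := good_xcl g; case: g => -[q00 q01 q10 q11 qs] _ hx.
rewrite /pic /pif /dec0 /dec1 /decD /= !hx /xraw /s0.
split; try lra. move: p_sum qs; lra.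
Qed.

End PiDef.

Section PiMeas.
Context dX (X : measurableType dX) (R : realType) (p : bool -> bool -> R)
  (q : bool -> bool -> X -> R) (mq : forall i j, measurable_fun setT (q i j)).
Local Open Scope ring_scope.

Lemma ms0 : measurable_fun setT (s0 p q).
Proof.
apply: measurable_realfun.measurable_funB => //.
all: try exact: measurable_realfun.measurable_funD.
Qed.

Lemma mtf : measurable_fun setT (tf p q).
Proof.
apply: measurable_realfun.measurable_maxr; apply: measurable_realfun.measurable_maxr => //.
- exact: measurable_realfun.measurable_funB.
- apply: measurable_realfun.measurable_funB => //; exact: ms0.
- apply: measurable_realfun.measurable_funB => //; exact: ms0.
Qed.

Lemma mxraw a b : measurable_fun setT (xraw p q a b).
Proof.
case: a; case: b; rewrite /xraw.
- apply: measurable_realfun.measurable_funD; last exact: mtf.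
  apply: measurable_realfun.measurable_funB => //; exact: ms0.
- apply: measurable_realfun.measurable_funB; [exact: ms0|exact: mtf].
- apply: measurable_realfun.measurable_funB; [by []|exact: mtf].
- exact: mtf.
Qed.

Lemma mxcl a b : measurable_fun setT (xcl p q a b).
Proof.
apply: measurable_realfun.measurable_minr => //; apply: measurable_realfun.measurable_maxr => //; exact: mxraw.
Qed.

Lemma mpic c : measurable_fun setT (pic p q c).
Proof.
rewrite /pic /pif; case: (decD c); last exact: mxcl.
apply: measurable_realfun.measurable_funB => //; exact: mxcl.
Qed.

End PiMeas.

Lemma mnat d2 (T2 : measurableType d2) (f : nat -> T2) : measurable_fun setT f.
Proof. by move=> _ Y _; exact: I. Qed.

Section P2.
Context d (T : measurableType d) (R : realType) (P : probability T R)
  dX (X : measurableType dX) (Z : T -> X) (mZ : measurable_fun setT Z).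
Local Notation mu := (pushZ P Z mZ : probability X R).
Local Notation Pr := (Pr P).

Lemma Pr_part (Y D : T -> bool) G :
  measurable_fun setT Y -> measurable_fun setT D -> measurable G ->
  Pr G = (Pr ([set w | Y w = false /\ D w = false] `&` G)
        + Pr ([set w | Y w = false /\ D w = true] `&` G)
        + Pr ([set w | Y w = true /\ D w = false] `&` G)
        + Pr ([set w | Y w = true /\ D w = true] `&` G))%R.
Proof.
move=> mY mD mG.
have mS i j : measurable [set w | Y w = i /\ D w = j].
  exact: measurableI (mpreT mY (mbool [set i])) (mpreT mD (mbool [set j])).
have mSG i j : measurable ([set w | Y w = i /\ D w = j] `&` G).
  exact: measurableI.
have e : G = [set w | Y w = false /\ D w = false] `&` G
        `|` [set w | Y w = false /\ D w = true] `&` G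
        `|` [set w | Y w = true /\ D w = false] `&` G
        `|` [set w | Y w = true /\ D w = true] `&` G.
  apply/seteqP; split => w /=; last by rewrite /setI /setU /=; intuition.
  move=> Gw; rewrite /setI /setU /=.
  by case: (Y w); case: (D w); intuition.
rewrite {1}e Pr_U //; last first.
  by apply/seteqP; split => w //=; rewrite /setI /setU /=; intuition congruence.
  by apply: measurableU => //; apply: measurableU.
rewrite Pr_U //; last first.
  by apply/seteqP; split => w //=; rewrite /setI /setU /=; intuition congruence.
  exact: measurableU.
rewrite Pr_U //.
by apply/seteqP; split => w //=; rewrite /setI /setU /=; intuition congruence.
Qed.

Variables (p : bool -> bool -> R) (q : bool -> bool -> X -> R).
Hypothesis mq : forall i j, measurable_fun setT (q i j).
Hypothesis p_ge0 : forall a b, (0 <= p a b)%R.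
Hypothesis p_sum : (p false false + p false true + p true false + p true true = 1)%R.

Definition vv c S := fine (\int[mu]_(z in S) (pic p q c z)%:E).

Lemma vvE c S : measurable S -> \int[mu]_(z in S) (pic p q c z)%:E = (vv c S)%:E.
Proof.
move=> mS; rewrite /vv fineK//; apply/fin_numPlt/andP; split.
  apply: (lt_le_trans _ (integral_ge0 _ _)); first exact: ltNyr.
  by move=> z _; rewrite lee_fin pic_ge0.
apply: (le_lt_trans (y := \int[mu]_(z in S) cst (1%R%:E) z)).
  apply: ge0_le_integral => //.
  all: try (by move=> z _; rewrite /cst lee_fin ?pic_ge0 ?pic_le1).
  all: try (by apply/measurable_realfun.measurable_EFinP; apply: measurable_funTS; exact: mpic).
by rewrite integral_cst// mul1e (le_lt_trans (probability_le1 _ _)) ?ltry.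
Qed.

Lemma vv_rect c B : c \in [:: 0; 2; 4; 6]%N -> measurable B ->
  (vv c B + vv c.+1 B = p (dec0 c) (dec1 c) * Pr (Z @^-1` B))%R.
Proof.
move=> c4 mB; apply/EFin_inj; rewrite EFinD -!vvE// -ge0_integralD//; last 4 first.
- by move=> z _; rewrite lee_fin pic_ge0.
- by apply/measurable_realfun.measurable_EFinP; apply: measurable_funTS; exact: mpic.
- by move=> z _; rewrite lee_fin pic_ge0.
- by apply/measurable_realfun.measurable_EFinP; apply: measurable_funTS; exact: mpic.
rewrite (_ : \int[mu]_(z in B) _ = \int[mu]_(z in B) cst (p (dec0 c) (dec1 c))%:E z).
  by rewrite integral_cst// EFinM -(muE _ mZ mB).
by apply: eq_integral => z _; rewrite -EFinD pic_pair.
Qed.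

Lemma vv_pair S c1 c2 (g : X -> R) : measurable S -> measurable_fun setT g ->
  {ae mu, forall z, (pic p q c1 z + pic p q c2 z = g z)%R} ->
  (vv c1 S + vv c2 S)%:E = \int[mu]_(z in S) (g z)%:E.
Proof.
move=> mS mg h; rewrite EFinD -!vvE// -ge0_integralD//; last 4 first.
- by move=> z _; rewrite lee_fin pic_ge0.
- by apply/measurable_realfun.measurable_EFinP; apply: measurable_funTS; exact: mpic.
- by move=> z _; rewrite lee_fin pic_ge0.
- by apply/measurable_realfun.measurable_EFinP; apply: measurable_funTS; exact: mpic.
apply: ae_eq_integral => //.
- apply: emeasurable_funD; apply/measurable_realfun.measurable_EFinP;
    apply: measurable_funTS; exact: mpic.
- by apply/measurable_realfun.measurable_EFinP; exact: measurable_funTS.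
- by apply: filterS h => z /= h _; rewrite -EFinD h.
Qed.

Definition kap (C : set (bool * bool)) : R :=
  ((if `[< C (false, false) >] then p false false else 0)
  + (if `[< C (false, true) >] then p false true else 0)
  + (if `[< C (true, false) >] then p true false else 0)
  + (if `[< C (true, true) >] then p true true else 0))%R.

Lemma ysec_rect (C : set (bool * bool)) (B : set X) c :
  ysection ((fun w : X * nat => (dec0 w.2, dec1 w.2)) @^-1` C `&` fst @^-1` B) c
  = if `[< C (dec0 c, dec1 c) >] then B else set0.
Proof.
apply/seteqP; split => z; rewrite /ysection /= in_setE /=;
  by case: asboolP => // h [].
Qed.

Lemma Pp_rect (C : set (bool * bool)) (B : set X) : measurable B ->
  Pp mu (mpic p mq) (pic_ge0 q p_ge0) (pic_sum q p_sum)
    ((fun w : X * nat => (dec0 w.2, dec1 w.2)) @^-1` C `&` fst @^-1` B)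
  = (kap C * Pr (Z @^-1` B))%:E.
Proof.
move=> mB; rewrite PpE.
under eq_bigr do rewrite ysec_rect.
have key b c : \int[mu]_(z in if b then B else set0) (pic p q c z)%:E
    = (if b then vv c B else 0%R)%:E.
  by case: b; [rewrite vvE|rewrite integral_set0].
rewrite /= !big_cons big_nil /dec0 /dec1 /= !key adde0 -!EFinD; congr EFin.
have h0 := vv_rect (c := 0%N) isT mB.
have h2 := vv_rect (c := 2%N) isT mB.
have h4 := vv_rect (c := 4%N) isT mB.
have h6 := vv_rect (c := 6%N) isT mB.
move: h0 h2 h4 h6; rewrite /dec0 /dec1 /kap /=.
case: asboolP => _; case: asboolP => _; case: asboolP => _; case: asboolP => _;
  lra.
Qed.

End P2.

Lemma kap1 (R : realType) (p : bool -> bool -> R) i j : kap p [set (i, j)] = p i j.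
Proof.
rewrite /kap.
have E (a b : bool) : `[< [set (i, j)] (a, b) >] = (a == i) && (b == j).
  apply/asboolP/andP => [[-> ->]|[/eqP -> /eqP ->]] //.
by rewrite !E; case: i E; case: j => /= _; rewrite ?addr0 ?add0r.
Qed.

Lemma kapT (R : realType) (p : bool -> bool -> R) :
  (p false false + p false true + p true false + p true true = 1)%R ->
  kap p setT = 1%R.
Proof. by move=> ps; rewrite /kap !asboolT. Qed.

Section P2main.
Context d (T : measurableType d) (R : realType) (P : probability T R)
  dX (X : measurableType dX) (Z : T -> X) (mZ : measurable_fun setT Z).
Local Notation mu := (pushZ P Z mZ : probability X R).
Local Notation Pr := (Pr P).

Lemma part2 (Y D : T -> bool) (q : bool -> bool -> X -> R) :
  measurable_fun setT Y -> measurable_fun setT D ->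
  cond_prob_version P Y D Z q ->
  (forall p : bool -> bool -> R,
     (forall i j, (0 <= p i j)%R) ->
     (p false false + p false true + p true false + p true true = 1)%R ->
     {ae pushforward P Z, forall z,
        [/\ (p true true <= q true false z + q true true z)%R &
        [/\
            (p false false <= q false false z + q false true z)%R,
            (p true false <= q true false z + q false true z)%R,
            (p false true <= q false false z + q true true z)%R,
            (q true false z <= p true false + p true true
               <= 1 - q false false z)%R &
            (q true true z <= p false true + p true true
               <= 1 - q false true z)%R]]} ->
     exists (d' : measure_display) (T' : measurableType d')
       (P' : probability T' R)
       (Yt Dt : T' -> bool) (Zt : T' -> X) (Y0 Y1 : T' -> bool),
       [/\ measurable_fun setT Yt, measurable_fun setT Dt,
           measurable_fun setT Zt, measurable_fun setT Y0 &
           measurable_fun setT Y1] /\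
       [/\
           same_law P P' (fun w => (Y w, D w, Z w))
                         (fun w => (Yt w, Dt w, Zt w)),
           independent_rv P' (fun w => (Y0 w, Y1 w)) Zt,
           (forall w, Yt w = if Dt w then Y1 w else Y0 w) &
           (forall i j, P' [set w | Y0 w = i /\ Y1 w = j] = (p i j)%:E)]).
Proof.
move=> mY mD [mq Hq] p p0 psum H.
pose S i j := [set w | Y w = i /\ D w = j].
have mS i j : measurable (S i j).
  exact: measurableI (mpreT mY (mbool [set i])) (mpreT mD (mbool [set j])).
have Hq' i j : forall B, measurable B ->
    P (S i j `&` Z @^-1` B) = \int[mu]_(z in B) (q i j z)%:E.
  exact: Hq.
have Iq i j := cp_int (mS i j) (mq i j) (Hq' i j).
have hq0 i j : {ae mu, forall z, (0 <= q i j z)%R}.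
  by apply: ae_ge0 => // B mB; rewrite -Hq'//; exact: measure_ge0.
pose f z := (q false false z + q false true z + q true false z + q true true z)%R.
have mf : measurable_fun setT f.
  by rewrite /f; do 3 apply: measurable_realfun.measurable_funD => //.
have If : mu.-integrable setT (EFin \o f).
  rewrite /f.
  apply: (@integrable_add _ _ _ mu (fun z => q false false z + q false true z + q true false z)%R (q true true)); last exact: Iq.
  apply: (@integrable_add _ _ _ mu (fun z => q false false z + q false true z)%R (q true false)); last exact: Iq.
  apply: (@integrable_add _ _ _ mu (q false false) (q false true)); exact: Iq.
have intf B : measurable B -> \int[mu]_(z in B) (f z)%:E = mu B.
  move=> mB; have mZB := mpreT mZ mB.
  rewrite /f int_addE//; try exact: Iq; last first.
    apply: (@integrable_add _ _ _ mu (fun z => q false false z + q false true z)%R (q true false)); last exact: Iq.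
    apply: (@integrable_add _ _ _ mu (q false false) (q false true)); exact: Iq.
  rewrite int_addE//; try exact: Iq; last first.
    apply: (@integrable_add _ _ _ mu (q false false) (q false true)); exact: Iq.
  rewrite int_addE//; try exact: Iq.
  rewrite -!Hq'// !PrE//; try exact: measurableI.
  by rewrite -!EFinD /S -(Pr_part P mY mD mZB) -(muE _ mZ mB).
have hs1 : {ae mu, forall z, (f z <= 1)%R}.
  by apply: ae_le => // B mB; rewrite intf// mul1e.
have hs2 : {ae mu, forall z, (1 <= f z)%R}.
  by apply: ae_ge => // B mB; rewrite intf// mul1e.
have H' : {ae mu, forall z,
        [/\ (p true true <= q true false z + q true true z)%R &
        [/\
            (p false false <= q false false z + q false true z)%R,
            (p true false <= q true false z + q false true z)%R,
            (p false true <= q false false z + q true true z)%R,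
            (q true false z <= p true false + p true true
               <= 1 - q false false z)%R &
            (q true true z <= p false true + p true true
               <= 1 - q false true z)%R]]} := H.
have hgood : {ae mu, forall z, good p q z}.
  apply: (ae8 _ (hq0 false false) (hq0 false true) (hq0 true false)
    (hq0 true true) hs1 hs2 H' H') => z a1 a2 a3 a4 a5 a6 a7 _.
  split => //; split => //.
  by apply/eqP; rewrite eq_le a5 a6.
pose P' : probability (X * nat)%type R :=
  Pp mu (mpic p mq) (pic_ge0 q p0) (pic_sum q psum).
have P'E A' : P' A' = \sum_(c <- iota 0 8) \int[mu]_(z in ysection A' c) (pic p q c z)%:E.
  by [].
exists _, (X * nat)%type, P',
  (fun w => if decD w.2 then dec1 w.2 else dec0 w.2), (fun w => decD w.2), fst,
  (fun w => dec0 w.2), (fun w => dec1 w.2).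
split.
  split.
  - exact: measurableT_comp (mnat (fun c => if decD c then dec1 c else dec0 c)) measurable_snd.
  - exact: measurableT_comp (mnat decD) measurable_snd.
  - exact: measurable_fst.
  - exact: measurableT_comp (mnat dec0) measurable_snd.
  - exact: measurableT_comp (mnat dec1) measurable_snd.
have gs := fun z (g : good p q z) => good_sums p0 psum g.
split.
- move=> A mA.
  have mG : measurable ((fun w => (Y w, D w, Z w)) @^-1` A).
    exact: mpreT (measurable_fun_pair (measurable_fun_pair mY mD) mZ) mA.
  pose Ayd y dd := (fun z : X => ((y, dd), z)) @^-1` A.
  have mA' y dd : measurable (Ayd y dd).
    apply: (mpreT (f := fun z : X => ((y, dd), z))) mA.
    exact: (@measurable_fun_pair _ _ _ _ _ _ (fun=> (y, dd)) (fun z => z)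
      (measurable_cst _) (@measurable_id _ X setT)).
  have e (y dd : bool) : [set w | Y w = y /\ D w = dd] `&`
      ((fun w => (Y w, D w, Z w)) @^-1` A) = S y dd `&` Z @^-1` Ayd y dd.
    by apply/seteqP; split => w /= [[a b] c]; split => //; move: c; rewrite /= a b.
  have pr (y dd : bool) c1 c2 :
      (forall z, good p q z -> pic p q c1 z + pic p q c2 z = q y dd z)%R ->
      (vv P mZ p q c1 (Ayd y dd) + vv P mZ p q c2 (Ayd y dd)
        = Pr (S y dd `&` Z @^-1` Ayd y dd))%R.
    move=> hc; apply/EFin_inj; rewrite (vv_pair mq p0 psum (mA' y dd) (mq y dd)).
      rewrite -Hq'// PrE//; apply: measurableI => //; exact: mpreT.
    by apply: filterS hgood => z /hc.
  have h00 := pr false false 0%N 2%N (fun z g => match gs z g with And4 a _ _ _ => a end).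
  have h10 := pr true false 4%N 6%N (fun z g => match gs z g with And4 _ a _ _ => a end).
  have h01 := pr false true 1%N 5%N (fun z g => match gs z g with And4 _ _ a _ => a end).
  have h11 := pr true true 3%N 7%N (fun z g => match gs z g with And4 _ _ _ a => a end).
  have ysec c : ysection ((fun w : X * nat => (if decD w.2 then dec1 w.2 else dec0 w.2,
      decD w.2, w.1)) @^-1` A) c = Ayd (if decD c then dec1 c else dec0 c) (decD c).
    by apply/seteqP; split => z; rewrite /ysection /= in_setE.
  rewrite P'E /=; under eq_bigr do rewrite ysec.
  rewrite !big_cons big_nil /dec0 /dec1 /decD /=.
  rewrite !(vvE P mZ mq p0 psum _ (mA' _ _)) adde0 -!EFinD.
  rewrite (PrE P mG) (Pr_part P mY mD mG) !e; congr EFin.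
  lra.
- move=> C B mC mB.
  pose W := fun w : X * nat => (dec0 w.2, dec1 w.2).
  have Rect C' B' : measurable B' ->
      P' (W @^-1` C' `&` fst @^-1` B') = (kap p C' * Pr (Z @^-1` B'))%:E.
    by move=> mB'; exact: (Pp_rect P mZ mq p0 psum C' mB').
  have eC : W @^-1` C = W @^-1` C `&` fst @^-1` setT.
    by rewrite preimage_setT setIT.
  have eB : fst @^-1` B = W @^-1` setT `&` fst @^-1` B.
    by rewrite preimage_setT setTI.
  rewrite (Rect C B mB) eC eB (Rect C setT measurableT) (Rect setT B mB).
  rewrite preimage_setT Pr_T kapT// -EFinM; congr EFin.
  by rewrite mulr1 mul1r.
- by [].
- move=> i j.
  pose W := fun w : X * nat => (dec0 w.2, dec1 w.2).
  have -> : [set w : X * nat | dec0 w.2 = i /\ dec1 w.2 = j] =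
      W @^-1` [set (i, j)] `&` fst @^-1` setT.
    apply/seteqP; split => w; rewrite /W /=.
      by case=> -> ->.
    by case=> [[-> ->] _].
  have R1 : P' (W @^-1` [set (i, j)] `&` fst @^-1` setT) = _ :=
    Pp_rect P mZ mq p0 psum [set (i, j)] measurableT.
  by rewrite R1 preimage_setT Pr_T kap1 mulr1.
Qed.

End P2main.

Unset Implicit Arguments.

Theorem theorem2 (R : realType) (d : measure_display) (T : measurableType d)
  (P : probability T R) (k : nat)
  (Y D : T -> bool) (Z : T -> k.-tuple R)
  (q : bool -> bool -> k.-tuple R -> R) :
  measurable_fun setT Y -> measurable_fun setT D -> measurable_fun setT Z ->
  cond_prob_version P Y D Z q ->
  (* (1) sharp bounds are implied by the model *)
  (forall Y0 Y1 : T -> bool,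
     measurable_fun setT Y0 -> measurable_fun setT Y1 ->
     independent_rv P (fun w => (Y0 w, Y1 w)) Z ->
     (forall w, Y w = if D w then Y1 w else Y0 w) ->
     {ae pushforward P Z, forall z,
        [/\ 0 <= P [set w | Y0 w = true /\ Y1 w = true]
              <= (q true false z + q true true z)%:E &
        [/\
            0 <= P [set w | Y0 w = false /\ Y1 w = false]
              <= (q false false z + q false true z)%:E,
            0 <= P [set w | Y0 w = true /\ Y1 w = false]
              <= (q true false z + q false true z)%:E,
            0 <= P [set w | Y0 w = false /\ Y1 w = true]
              <= (q false false z + q true true z)%:E,
            (q true false z)%:E <= P [set w | Y0 w = true]
              <= (1 - q false false z)%:E &
            (q true true z)%:E <= P [set w | Y1 w = true]
              <= (1 - q false true z)%:E]]}) /\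
  (* (2) the bounds are sharp *)
  (forall p : bool -> bool -> R,
     (forall i j, (0 <= p i j)%R) ->
     (p false false + p false true + p true false + p true true = 1)%R ->
     {ae pushforward P Z, forall z,
        [/\ (p true true <= q true false z + q true true z)%R &
        [/\
            (p false false <= q false false z + q false true z)%R,
            (p true false <= q true false z + q false true z)%R,
            (p false true <= q false false z + q true true z)%R,
            (q true false z <= p true false + p true true
               <= 1 - q false false z)%R &
            (q true true z <= p false true + p true true
               <= 1 - q false true z)%R]]} ->
     exists (d' : measure_display) (T' : measurableType d')
       (P' : probability T' R)
       (Yt Dt : T' -> bool) (Zt : T' -> k.-tuple R) (Y0 Y1 : T' -> bool),
       [/\ measurable_fun setT Yt, measurable_fun setT Dt,
           measurable_fun setT Zt, measurable_fun setT Y0 &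
           measurable_fun setT Y1] /\
       [/\
           same_law P P' (fun w => (Y w, D w, Z w))
                         (fun w => (Yt w, Dt w, Zt w)),
           independent_rv P' (fun w => (Y0 w, Y1 w)) Zt,
           (forall w, Yt w = if Dt w then Y1 w else Y0 w) &
           (forall i j, P' [set w | Y0 w = i /\ Y1 w = j] = (p i j)%:E)]).
Proof.
move=> mY mD mZ cp; split.
- exact: (part1 mZ mY mD cp).
- exact: (part2 mZ mY mD cp).
Qed.
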